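(* Let $\mathcal{K}$ be the convex set of real symmetric positive semi-definite $N\times N$ matrices $W$ with $\operatorname{Tr}W=N$, let $\mathbb{G}=\{G \text{ real symmetric } N\times N: G_{\mu\mu}=1,\ \mu=1,\ldots,N\}$, and let $\mathcal{G}=\mathbb{G}\cap\mathcal{K}$. For a closed face $\mathcal{F}$ of $\mathcal{G}$ let $\overline{\mathcal F}$ be the intersection of all faces of $\mathcal{K}$ containing $\mathcal F$. Then $\overline{\mathcal F}\cap\mathbb{G}=\mathcal{F}$ for every closed face $\mathcal{F}$ of $\mathcal{G}$.
   Context: A face of a convex set $C$ is a convex subset $F\subseteq C$ such that whenever $x\in F$, $y,z\in C$, $0<\alpha<1$ and $x=\alpha y+(1-\alpha)z$, then $y,z\in F$. *)

(* Defs.v *)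
From HB Require Import structures.
From mathcomp Require Import all_boot all_order all_algebra.
From mathcomp Require Import all_classical all_reals all_analysis.
Set Implicit Arguments. Unset Strict Implicit. Unset Printing Implicit Defensive.
Import Order.TTheory GRing.Theory Num.Theory.
Import numFieldTopology.Exports.
Local Open Scope classical_set_scope.
Local Open Scope ring_scope.

Definition mx_convex (R : realType) (N : nat) (C : set 'M[R]_N) : Prop :=
  forall x y, C x -> C y -> forall a : R, 0 <= a <= 1 ->
    C (a *: x + (1 - a) *: y).

Definition is_face (R : realType) (N : nat) (C F : set 'M[R]_N) : Prop :=
  [/\ F `<=` C, mx_convex F &
      forall x y z (a : R), F x -> C y -> C z -> 0 < a < 1 ->
        x = a *: y + (1 - a) *: z -> F y /\ F z].

Definition psd (R : realType) (N : nat) (W : 'M[R]_N) : Prop :=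
  W^T = W /\ forall v : 'cV[R]_N, 0 <= (v^T *m W *m v) ord0 ord0.

Definition calK (R : realType) (N : nat) : set 'M[R]_N :=
  [set W | psd W /\ \tr W = N%:R].

Definition bbG (R : realType) (N : nat) : set 'M[R]_N :=
  [set G | G^T = G /\ forall mu, G mu mu = 1].

Definition calG (R : realType) (N : nat) : set 'M[R]_N := @bbG R N `&` @calK R N.

Definition face_hull (R : realType) (N : nat) (F : set 'M[R]_N) : set 'M[R]_N :=
  [set W | forall F', @is_face R N (@calK R N) F' -> F `<=` F' -> F' W].

(* Main.v *)
Require Import Defs.
From HB Require Import structures.
From mathcomp Require Import all_boot all_order all_algebra.
From mathcomp Require Import all_classical all_reals all_analysis.
From mathcomp Require Import ring lra.
Import Order.TTheory GRing.Theory Num.Theory.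
Import numFieldTopology.Exports.
Local Open Scope classical_set_scope.
Local Open Scope ring_scope.

Section Aux.
Variables (R : realType) (N : nat).
Implicit Types (M X W : 'M[R]_N) (u v w : 'cV[R]_N).

Definition bf M u v : R := (u^T *m M *m v) ord0 ord0.

Lemma bfE M u v : bf M u v = \sum_j (\sum_i u i ord0 * M i j) * v j ord0.
Proof. rewrite /bf mxE; apply: eq_bigr => j _; rewrite mxE; congr (_ * _).
by apply: eq_bigr => i _; rewrite mxE. Qed.

Lemma bfDl M u w v : bf M (u + w) v = bf M u v + bf M w v.
Proof. by rewrite /bf linearD /= !mulmxDl mxE. Qed.
Lemma bfZl M a u v : bf M (a *: u) v = a * bf M u v.
Proof. by rewrite /bf linearZ /= -!scalemxAl mxE. Qed.
Lemma bfDr M u w v : bf M v (u + w) = bf M v u + bf M v w.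
Proof. by rewrite /bf !mulmxDr mxE. Qed.
Lemma bfZr M a u v : bf M v (a *: u) = a * bf M v u.
Proof. by rewrite /bf -!scalemxAr mxE. Qed.
Lemma bfDm M1 M2 u v : bf (M1 + M2) u v = bf M1 u v + bf M2 u v.
Proof. by rewrite /bf mulmxDr mulmxDl mxE. Qed.
Lemma bfZm M a u v : bf (a *: M) u v = a * bf M u v.
Proof. by rewrite /bf -scalemxAr -scalemxAl mxE. Qed.
Lemma bfN M u v : bf (- M) u v = - bf M u v.
Proof. by rewrite -scaleN1r bfZm mulN1r. Qed.
Lemma bf_sym M u v : M^T = M -> bf M u v = bf M v u.
Proof.
move=> sM; have tE : forall A : 'M[R]_1, A ord0 ord0 = A^T ord0 ord0 by move=> A; rewrite mxE.
by rewrite /bf [RHS]tE !trmx_mul trmxK sM mulmxA.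
Qed.

Lemma discr (a b c : R) : 0 <= c ->
  (forall t, 0 <= a + t * b + t * b + t * t * c) -> b ^+ 2 <= a * c.
Proof.
move=> c0 H; have [cz|cp] := eqVneq c 0.
  subst c; have [bz|bn] := eqVneq b 0; first by rewrite bz expr0n /= mulr0.
  have := H (- (a + 1) / (b *+ 2)).
  have -> : - (a + 1) / (b *+ 2) * b = - (a + 1) / 2.
    by field.
  by move=> h; exfalso; lra.
have cgt : 0 < c by rewrite lt0r cp.
have := H (- b / c).
have -> : a + - b / c * b + - b / c * b + - b / c * (- b / c) * c = (a * c - b ^+ 2) / c.
  by field.
by rewrite ler_pdivlMr // mul0r subr_ge0.
Qed.

Lemma CS X u v : psd X -> bf X u v ^+ 2 <= bf X u u * bf X v v.
Proof.
case=> sX pX; apply: discr; first exact: pX. move=> t.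
have h0 : 0 <= bf X (u + t *: v) (u + t *: v) by exact: pX.
move: h0; rewrite !(bfDl, bfDr, bfZl, bfZr) (bf_sym _ v u sX).
move=> h; lra.
Qed.

Lemma bf1_ge0 w : 0 <= bf 1%:M w w.
Proof.
rewrite bfE; apply: sumr_ge0 => j _.
rewrite (bigD1 j) //= big1 ?addr0; last by move=> i /negbTE ij; rewrite mxE ij mulr0n mulr0.
by rewrite mxE eqxx mulr1n mulr1 -expr2 sqr_ge0.
Qed.

Lemma bf1_term w j : (\sum_i w i ord0 * (1%:M : 'M[R]_N) i j) * w j ord0 = w j ord0 * w j ord0.
Proof.
rewrite (bigD1 j) //= big1 ?addr0; last by move=> i /negbTE ij; rewrite mxE ij mulr0n mulr0.
by rewrite mxE eqxx mulr1n mulr1.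
Qed.

Lemma bf1_eq0 w : bf 1%:M w w = 0 -> w = 0.
Proof.
rewrite bfE => h.
have h2 : forall j, w j ord0 * w j ord0 = 0.
  move=> j; rewrite -bf1_term; apply: (@psumr_eq0P _ _ predT _ _ h j isT).
  by move=> k _; rewrite bf1_term -expr2 sqr_ge0.
apply/matrixP => i k; rewrite (ord1 k) mxE.
by have /eqP := h2 i; rewrite mulf_eq0 orbb => /eqP.
Qed.

Lemma bf1_mul X u : bf 1%:M (X *m u) (X *m u) = bf (X^T *m X) u u.
Proof. by rewrite /bf mulmx1 trmx_mul !mulmxA. Qed.
Lemma bf_mull X u : bf X (X *m u) u = bf (X^T *m X) u u.
Proof. by rewrite /bf trmx_mul !mulmxA. Qed.

Lemma psd_ker X v : psd X -> bf X v v = 0 -> X *m v = 0.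
Proof.
move=> pX h; apply: bf1_eq0.
have -> : bf 1%:M (X *m v) (X *m v) = bf X (X *m v) v.
  by rewrite bf1_mul bf_mull.
have := @CS X (X *m v) v pX; rewrite h mulr0.
by move=> h2; apply/eqP; rewrite -sqrf_eq0 eq_le h2 sqr_ge0.
Qed.

Lemma term_bd (x y m S : R) : x * x <= S -> y * y <= S -> x * m * y <= `|m| * S.
Proof.
move=> hx hy.
have h1 : x * y <= S by have := sqr_ge0 (x - y); nra.
have h2 : - (x * y) <= S by have := sqr_ge0 (x + y); nra.
have [m0|m0] := lerP 0 m.
  rewrite ger0_norm //.
  have hs : 0 <= S - x * y by lra.
  have h3 := mulr_ge0 m0 hs.
  nra.
rewrite ltr0_norm //.
have hm : 0 <= - m by lra.
have hs : 0 <= S + x * y by lra.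
have h3 := mulr_ge0 hm hs.
nra.
Qed.

Lemma bf1E u : bf 1%:M u u = \sum_j u j ord0 * u j ord0.
Proof. by rewrite bfE; apply: eq_bigr => j _; rewrite bf1_term. Qed.

Lemma coord_le u i : u i ord0 * u i ord0 <= bf 1%:M u u.
Proof.
rewrite bf1E (bigD1 i) //= lerDl; apply: sumr_ge0 => k _.
by rewrite -expr2 sqr_ge0.
Qed.

Lemma crude M : exists c, 0 <= c /\ forall u, bf M u u <= c * bf 1%:M u u.
Proof.
exists (\sum_j \sum_i `|M i j|); split.
  by apply: sumr_ge0 => j _; apply: sumr_ge0 => i _.
move=> u; rewrite bfE mulr_suml; apply: ler_sum => j _.
rewrite !mulr_suml; apply: ler_sum => i _.
exact: term_bd (coord_le u i) (coord_le u j).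
Qed.

Lemma dom A B : psd A -> psd B -> (forall v, A *m v = 0 -> B *m v = 0) ->
  exists lam, 0 <= lam /\ forall v, bf B v v <= lam * bf A v v.
Proof.
move=> pA [sB _] H; have [sA pAp] := pA.
have sub : (B <= A)%MS.
  rewrite submxE; apply/eqP.
  set C := cokermx A.
  have AC : A *m C = 0 := mulmx_coker A.
  have CA : C^T *m A = 0 by rewrite -{1}sA -trmx_mul AC trmx0.
  have key : forall i, A *m (row i C^T)^T = 0.
    by move=> i; rewrite -{1}sA -trmx_mul -row_mul CA row0 trmx0.
  apply: trmx_inj; rewrite trmx_mul sB trmx0; apply/row_matrixP => i.
  rewrite row_mul row0; apply: trmx_inj; rewrite trmx_mul sB trmx0.
  exact: H _ (key i).
set P := pinvmx A.
have e1 : B = B *m P *m A by rewrite mulmxKpV.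
have e2 : B = A *m P^T *m B.
  by have := congr1 trmx e1; rewrite !trmx_mul sB sA mulmxA.
have e3 : B = A *m (P^T *m B *m P) *m A.
  transitivity (A *m P^T *m (B *m P *m A)); first by rewrite -e1.
  by rewrite !mulmxA.
set Y := P^T *m B *m P.
have [cY [cY0 hY]] := crude Y; have [cX [cX0 hX]] := crude A.
exists (cY * cX); split; first exact: mulr_ge0.
move=> v.
have E : bf B v v = bf Y (A *m v) (A *m v).
  by rewrite {1}e3 /bf /Y [(A *m v)^T]trmx_mul sA !mulmxA.
have Hs : bf 1%:M (A *m v) (A *m v) = bf A v (A *m v).
  by rewrite bf1_mul sA /bf !mulmxA.
have s0 := bf1_ge0 (A *m v).
have cs := @CS A v (A *m v) pA.
have hx := hX (A *m v).
have q0 : 0 <= bf A v v := pAp v.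
have cs' : bf 1%:M (A *m v) (A *m v) ^+ 2 <= bf A v v * (cX * bf 1%:M (A *m v) (A *m v)).
  by apply: le_trans (ler_wpM2l q0 hx); rewrite Hs.
have sle : bf 1%:M (A *m v) (A *m v) <= cX * bf A v v.
  move: cs' s0; set s := bf 1%:M _ _; set q := bf A v v => cs' s0.
  have cq : 0 <= cX * q := mulr_ge0 cX0 q0.
  rewrite leNgt; apply/negP => lt.
  have sp : 0 < s := le_lt_trans cq lt.
  have h1 : cX * q * s < s * s by rewrite ltr_pM2r.
  move: cs'; rewrite expr2 mulrA (mulrC q cX) => cs'.
  by have := lt_le_trans h1 cs'; rewrite ltxx.
rewrite E; apply: le_trans (hY _) _; rewrite -mulrA; exact: ler_wpM2l.
Qed.

Lemma rc {S : 'M[R]_N} {r : 'rV[R]_N} : S^T = S -> r *m S = 0 -> S *m r^T = 0.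
Proof. by move=> sS h; rewrite -{1}sS -trmx_mul h trmx0. Qed.
Lemma cr {S : 'M[R]_N} {v : 'cV[R]_N} : S^T = S -> S *m v = 0 -> v^T *m S = 0.
Proof. by move=> sS h; rewrite -{1}sS -trmx_mul h trmx0. Qed.

Lemma psd_comb X W a b : psd X -> psd W -> 0 <= a -> 0 <= b -> psd (a *: X + b *: W).
Proof.
move=> [sX pX] [sW pW] a0 b0; split; first by rewrite linearD !linearZ /= sX sW.
move=> v; change (0 <= bf (a *: X + b *: W) v v).
rewrite bfDm !bfZm; apply: addr_ge0; apply: mulr_ge0 => //; [exact: pX | exact: pW].
Qed.

Lemma max_rank (F : set 'M[R]_N) X0 : F X0 ->
  exists X, F X /\ forall Z, F Z -> (\rank Z <= \rank X)%N.
Proof.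
move=> FX0.
case: (pselect (exists X, F X /\ forall Z, F Z -> (\rank Z <= \rank X)%N)) => // nH.
exfalso.
have step : forall X, F X -> exists Z, F Z /\ (\rank X < \rank Z)%N.
  move=> X FX; apply: contrapT => nZ; apply: nH; exists X; split => // Z FZ.
  rewrite leqNgt; apply/negP => lt; apply: nZ; by exists Z.
have : forall k, exists X, F X /\ (k <= \rank X)%N.
  elim=> [|k [X [FX hk]]]; first by exists X0.
  have [Z [FZ lt]] := step X FX; exists Z; split => //; exact: leq_ltn_trans hk lt.
move/(_ N.+1) => [X [_ h]]; have := leq_trans h (rank_leq_col X).
by rewrite ltnn.
Qed.

Lemma split0 {a p q : R} : 0 < a -> a < 1 -> 0 <= p -> 0 <= q ->
  a * p + (1 - a) * q = 0 -> p = 0 /\ q = 0.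
Proof. by move=> *; split; nra. Qed.

Lemma face_ker X : is_face (@calK R N) [set Y | calK Y /\ forall v, X *m v = 0 -> Y *m v = 0].
Proof.
split.
- by move=> Y [].
- move=> x y [[px tx] kx] [[py ty] ky] a /andP[a0 a1]; split; first split.
  + by apply: psd_comb => //; rewrite subr_ge0.
  + by rewrite mxtraceD !mxtraceZ tx ty -mulrDl addrC subrK mul1r.
  + by move=> v hv; rewrite mulmxDl -!scalemxAl kx // ky // !scaler0 addr0.
- move=> x y z a [[px tx] kx] [py ty] [pz tz] /andP[a0 a1] e; subst x.
  have H : forall v, X *m v = 0 -> y *m v = 0 /\ z *m v = 0.
    move=> v hv; have h := kx v hv.
    have hb : bf (a *: y + (1 - a) *: z) v v = 0 by rewrite /bf -mulmxA h mulmx0 mxE.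
    rewrite bfDm !bfZm in hb.
    have qy : 0 <= bf y v v by case: py => _; apply.
    have qz : 0 <= bf z v v by case: pz => _; apply.
    have [hy hz] := split0 a0 a1 qy qz hb.
    by split; apply: psd_ker.
  by split; split => //; move=> v /H [].
Qed.

Lemma ker_max (F : set 'M[R]_N) X Z : F `<=` @calK R N -> mx_convex F -> F X -> F Z ->
  (forall Y, F Y -> (\rank Y <= \rank X)%N) -> forall v, X *m v = 0 -> Z *m v = 0.
Proof.
move=> FK cF FX FZ mx.
have h2 : 0 <= (2^-1 : R) <= 1.
  by apply/andP; split; [rewrite invr_ge0 ler0n | rewrite invf_le1 // ?ler1n ?ltr0n].
set M := 2^-1 *: X + (1 - 2^-1) *: Z.
have FM : F M := cF X Z FX FZ _ h2.
have [[sX pX] _] := FK X FX; have [[sZ pZ] _] := FK Z FZ; have [[sM pM] _] := FK M FM.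
have Mker : forall v, M *m v = 0 -> X *m v = 0 /\ Z *m v = 0.
  move=> v h.
  have hb : bf M v v = 0 by rewrite /bf -mulmxA h mulmx0 mxE.
  rewrite /M bfDm !bfZm in hb.
  have qx : 0 <= bf X v v by apply: pX.
  have qz : 0 <= bf Z v v by apply: pZ.
  have a0 : 0 < 2^-1 :> R by rewrite invr_gt0 ltr0n.
  have a1 : 2^-1 < 1 :> R by rewrite invf_lt1 // ?ltr1n ?ltr0n.
  have [hx hz] := split0 a0 a1 qx qz hb.
  by split; apply: psd_ker.
have sub : (kermx M <= kermx X)%MS.
  rewrite sub_kermx; apply/eqP/row_matrixP => i; rewrite row_mul row0.
  have r0 : row i (kermx M) *m M = 0 by rewrite -row_mul mulmx_ker row0.
  have := (Mker _ (rc sM r0)).1 => /(cr sX); by rewrite trmxK.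
have sub2 : (kermx X <= kermx M)%MS.
  rewrite -(mxrank_leqif_sup sub).2 eqn_leq (mxrank_leqif_sup sub).1 /=.
  by rewrite !mxrank_ker leq_sub2l // mx.
move=> v hv.
have : (v^T <= kermx X)%MS by rewrite sub_kermx; apply/eqP; exact: cr.
move=> /(submx_trans) /(_ sub2); rewrite sub_kermx => /eqP /(rc sM); rewrite trmxK.
by move=> /Mker [].
Qed.

End Aux.

Lemma num_facts (R : realType) (lam : R) : 0 <= lam ->
  let a := (lam + 2)^-1 in [/\ 0 < a, a < 1, 1 - a != 0 & a * lam <= 1].
Proof.
move=> l0 a.
have p : 0 < lam + 2 by lra.
have a0 : 0 < a by rewrite invr_gt0.
have a1 : a < 1 by rewrite invf_lt1 //; lra.
split => //; first by rewrite subr_eq0 eq_sym lt_eqF.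
by rewrite mulrC -/(lam / (lam + 2)) ler_pdivrMr // mul1r; lra.
Qed.

Theorem lemma2 (R : realType) (N : nat) (F : set 'M[R]_N) :
  @is_face R N (@calG R N) F -> closed F ->
  @face_hull R N F `&` @bbG R N = F.
Proof.
move=> [FG Fconv Fext] _.
have FK : F `<=` @calK R N by move=> x /FG [].
apply/seteqP; split; last first.
  move=> x Fx; split; last by have [] := FG x Fx.
  by move=> F' _ sub; apply: sub.
move=> W [hW [sW dW]].
case: (pselect (exists X0, F X0)) => [[X0 FX0]|nF]; last first.
  exfalso; have : (@set0 'M[R]_N) W; last by [].
  apply: hW; last by move=> x Fx; apply: nF; exists x.
  by split; [move=> x [] | move=> x y [] | move=> x y z a []].
have [X [FX mx]] := @max_rank R N F X0 FX0.
have := hW _ (@face_ker R N X) => /(_ _) [].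
  move=> Z FZ; split; first exact: FK.
  exact: (@ker_max R N F X Z FK Fconv FX FZ mx).
move=> KW kW.
have [[sX pX] tX] := FK X FX.
have [[_ _] tW] := KW.
have [lam [l0 hl]] := @dom R N X W (FK X FX).1 KW.1 kW.
have [a0 a1 a1n al] := @num_facts R lam l0.
set a := (lam + 2)^-1 in a0 a1 a1n al.
set Z := (1 - a)^-1 *: (X - a *: W).
have eX : X = a *: W + (1 - a) *: Z.
  by rewrite /Z scalerA mulfV // scale1r addrC subrK.
have GX : @calG R N X by exact: FG.
have GW : @calG R N W by split => //; split.
have GZ : @calG R N Z.
  have sZ : Z^T = Z by rewrite /Z linearZ /= linearB /= linearZ /= sX sW.
  split; first split => //.
    move=> mu; rewrite /Z !mxE dW.
    have [[_ dX] _] := GX; rewrite dX mulr1 mulVf //.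
  split; first split => //.
    move=> v; change (0 <= bf R N Z v v).
    rewrite /Z !(bfZm, bfDm, bfN); apply: mulr_ge0.
      by rewrite invr_ge0 subr_ge0 ltW.
    have hv := hl v; have qx0 : 0 <= bf R N X v v by apply: pX.
    rewrite subr_ge0; apply: (le_trans (ler_wpM2l (ltW a0) hv)).
    rewrite mulrA -[X in _ <= X]mul1r; apply: ler_wpM2r => //.
  rewrite /Z mxtraceZ linearB /= mxtraceZ tX tW.
  by rewrite -{1}[N%:R]mul1r -mulrBl mulrA mulVf // mul1r.
by have [] := Fext X W Z a FX GW GZ (ltac:(by rewrite a0 a1)) eX.
Qed.
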